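(* Let $v=(v_n)_{n\in\mathbb{N}}\in\ell^1$ with $v_n>0$ for all $n$ and $\sum_{n=1}^\infty v_n=1$, and let $\tau_v(f)=\sum_{n=1}^\infty v_n f(1/2^{n-1})$ for $f\in C(\overline{\mathbb{N}})$. The following are equivalent: (1) $\tau_v(\varphi_n)=0$ for all $n\in\mathbb{N}$; (2) $v=(2^{-n})_{n\in\mathbb{N}}$.
   Context: $\mathbb{N}=\{1,2,\dots\}$, $\overline{\mathbb{N}}=\{1/2^{n-1}: n\in\mathbb{N}\}\cup\{0\}\subseteq\mathbb{R}$. For $n\in\mathbb{N}_0$, $\varphi_n:\overline{\mathbb{N}}\to\mathbb{R}$ is defined by $\varphi_n(x)=0$ if $x>1/2^{n-1}$, $\varphi_n(x)=-1$ if $x=1/2^{n-1}$, and $\varphi_n(x)=1$ if $x<1/2^{n-1}$. *)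

(* Defs.v *)
From Stdlib Require Import Reals.
From Coquelicot Require Import Coquelicot.
Open Scope R_scope.

(* The point 1/2^(n-1) of \overline{N}, written as 2^(1-n) (so n = 0 gives 2). *)
Definition pt (n : nat) : R := powerRZ 2 (1 - Z.of_nat n).

Definition phi (n : nat) (x : R) : R :=
  if Rlt_dec (pt n) x then 0
  else if Req_EM_T x (pt n) then -1 else 1.

(* tau_v(f) = sum_{n>=1} v_n f(1/2^(n-1)); the sequence v is indexed from 1
   (v 0 is irrelevant). Only the values of f on \overline{N} matter. *)
Definition tau (v : nat -> R) (f : R -> R) : R :=
  Series (fun k => v (S k) * f (pt (S k))).

(* Main.v *)
Require Import Defs.
From Stdlib Require Import Reals.
From Coquelicot Require Import Coquelicot.
From Stdlib Require Import Lra Lia Arith.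
Open Scope R_scope.

Lemma pt_eq m : pt m = 2 * / 2 ^ m.
Proof.
  unfold pt. replace (1 - Z.of_nat m)%Z with (1 + - Z.of_nat m)%Z by lia.
  rewrite powerRZ_add by lra. rewrite powerRZ_neg', pow_powerRZ. simpl. ring.
Qed.

Lemma pow2_pos m : 0 < 2 ^ m.
Proof. apply pow_lt; lra. Qed.

Lemma pt_lt a b : (a < b)%nat -> pt b < pt a.
Proof.
  intro H. rewrite !pt_eq. apply Rmult_lt_compat_l; [lra|].
  apply Rinv_lt_contravar. apply Rmult_lt_0_compat; apply pow2_pos.
  apply Rlt_pow; [lra|exact H].
Qed.

Lemma phi_val p k :
  phi (S p) (pt (S k)) = if lt_dec k p then 0 else if Nat.eq_dec k p then -1 else 1.
Proof.
  unfold phi. destruct (lt_dec k p) as [H|H].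
  - destruct (Rlt_dec (pt (S p)) (pt (S k))) as [_|n]; [reflexivity|].
    exfalso; apply n, pt_lt; lia.
  - destruct (Nat.eq_dec k p) as [->|H2].
    + destruct (Rlt_dec (pt (S p)) (pt (S p))) as [r|_]; [lra|].
      destruct (Req_EM_T (pt (S p)) (pt (S p))); [reflexivity|congruence].
    + assert (Hl : pt (S k) < pt (S p)) by (apply pt_lt; lia).
      destruct (Rlt_dec (pt (S p)) (pt (S k))) as [r|_]; [lra|].
      destruct (Req_EM_T (pt (S k)) (pt (S p))) as [e|_]; [lra|reflexivity].
Qed.

Lemma tau_eq v p (hpos : forall n : nat, (1 <= n)%nat -> 0 < v n)
  (hex : ex_series (fun k => v (S k))) :
  tau v (phi (S p)) = - v (S p) + Series (fun k => v (S (S p + k))).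
Proof.
  unfold tau. set (a := fun k => v (S k) * phi (S p) (pt (S k))).
  assert (ha : ex_series a).
  { apply (@ex_series_le R_AbsRing R_CompleteNormedModule _ (fun k => v (S k))); [|exact hex].
    intro n. unfold a. change norm with Rabs. simpl.
    assert (0 < v (S n)) by (apply hpos; lia).
    rewrite phi_val. destruct (lt_dec n p); [|destruct (Nat.eq_dec n p)].
    + rewrite Rmult_0_r, Rabs_R0; lra.
    + rewrite Rabs_left; lra.
    + rewrite Rmult_1_r, Rabs_pos_eq; lra. }
  assert (Hj : forall j, (j <= p)%nat -> Series a = Series (fun k => a (j + k)%nat)).
  { induction j as [|j IH]; intro Hjp.
    - apply Series_ext; reflexivity.
    - rewrite IH by lia. rewrite Series_incr_1.
      2:{ apply (ex_series_incr_n a j) in ha. exact ha. }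
      replace (a (j + 0)%nat) with 0.
      2:{ unfold a. rewrite phi_val. destruct (lt_dec (j+0) p); [ring|lia]. }
      rewrite Rplus_0_l. apply Series_ext. intro k. f_equal. lia. }
  rewrite (Hj p (le_n p)). rewrite Series_incr_1.
  2:{ apply (ex_series_incr_n a p) in ha. exact ha. }
  f_equal.
  - unfold a. rewrite phi_val. replace (p + 0)%nat with p by lia.
    destruct (lt_dec p p); [lia|]. destruct (Nat.eq_dec p p); [ring|lia].
  - apply Series_ext. intro k. unfold a. rewrite phi_val.
    destruct (lt_dec (p + S k) p); [lia|]. destruct (Nat.eq_dec (p + S k) p); [lia|].
    replace (S (p + S k)) with (S (S p + k)) by lia. ring.
Qed.

Theorem proposition3p5 (v : nat -> R)
  (hpos : forall n : nat, (1 <= n)%nat -> 0 < v n)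
  (hsum : is_series (fun k => v (S k)) 1) :
  (forall n : nat, (1 <= n)%nat -> tau v (phi n) = 0) <->
  (forall n : nat, (1 <= n)%nat -> v n = / 2 ^ n).
Proof.
  assert (hex : ex_series (fun k => v (S k))) by (eexists; exact hsum).
  set (T := fun j => Series (fun k => v (S (j + k)))).
  assert (HT : forall j, T j = v (S j) + T (S j)).
  { intro j. unfold T. rewrite Series_incr_1.
    2:{ apply (ex_series_incr_n _ j) in hex. exact hex. }
    f_equal; [f_equal; lia|]. apply Series_ext; intro k; f_equal; lia. }
  assert (HT0 : T 0%nat = 1).
  { unfold T. rewrite (Series_ext _ (fun k => v (S k))) by reflexivity.
    apply is_series_unique; exact hsum. }
  split.
  - intros H.
    assert (Hv : forall p, v (S p) = T (S p)).
    { intro p. specialize (H (S p) ltac:(lia)). rewrite tau_eq in H by assumption.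
      unfold T. lra. }
    assert (HTp : forall p, T p = / 2 ^ p).
    { induction p as [|p IH]. { rewrite HT0; simpl; rewrite Rinv_1; reflexivity. }
      rewrite HT, <- Hv in IH. simpl. 
      assert (0 < 2 ^ p) by apply pow2_pos.
      rewrite Rinv_mult, <- IH, <- Hv. lra. }
    intros n Hn. destruct n as [|p]; [lia|]. rewrite Hv. apply HTp.
  - intros H n Hn. destruct n as [|p]; [lia|]. rewrite tau_eq by assumption.
    rewrite H by lia.
    rewrite (Series_ext _ (fun k => / 2 ^ (S (S p)) * (/ 2) ^ k)).
    2:{ intro k. rewrite H by lia. rewrite pow_inv.
        rewrite <- Rinv_mult, <- pow_add. f_equal. }
    rewrite Series_scal_l.
    rewrite (is_series_unique _ (/ (1 - / 2))).
    2:{ apply is_series_geom. rewrite Rabs_pos_eq; lra. }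
    assert (0 < 2 ^ p) by apply pow2_pos. simpl. field. lra.
Qed.
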